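(* Let $(M,\mu)$ be a finite measure space, $\beta>1$, $f:M\to\mathbb R$ measurable and $E\subseteq M$ measurable with $0<\mu(E)<\mu(M)$. Define $$\tilde f(y)=\begin{cases}\operatorname{ess\,sup}_{z\in M\setminus E}|f(z)|, & y\in E,\\ f(y), & y\in M\setminus E.\end{cases}$$ Then $\tilde f^*(t)\ge f^*(t)$ for $\mu(E)\le t\le\mu(M)$, and $$\int_{M\setminus E}|\tilde f|^\beta\,d\mu=\int_{\mu(E)}^{\mu(M)}[\tilde f^*(t)]^\beta\,dt.$$
   Context: For measurable $f$ on $(M,\mu)$: $m(f,s)=\mu(\{|f|>s\})$ and $f^*(t)=\inf\{s\ge0:m(f,s)\le t\}$ is the nonincreasing rearrangement. *)

(* Defs.v *)
From HB Require Import structures.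
From mathcomp Require Import all_boot all_order all_algebra.
From mathcomp Require Import all_classical all_reals all_analysis.
From mathcomp Require Import ess_sup_inf.
Set Implicit Arguments. Unset Strict Implicit. Unset Printing Implicit Defensive.
Import Order.TTheory GRing.Theory Num.Theory.
Import numFieldNormedType.Exports.
Local Open Scope classical_set_scope.
Local Open Scope ring_scope.
Local Open Scope ereal_scope.

Definition distf d (T : measurableType d) (R : realType)
  (mu : {measure set T -> \bar R}) (g : T -> \bar R) (s : R) : \bar R :=
  mu [set x | s%:E < `|g x|].

(* nonincreasing rearrangement g^*(t) = inf {s >= 0 : m(g,s) <= t}
   (inf of the empty set is +oo) *)
Definition rearr d (T : measurableType d) (R : realType)
  (mu : {measure set T -> \bar R}) (g : T -> \bar R) (t : R) : \bar R :=
  ereal_inf [set s%:E | s in [set s : R | (0 <= s)%R /\ distf mu g s <= t%:E]].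

Definition ftilde d (T : measurableType d) (R : realType)
  (mu : {measure set T -> \bar R}) (f : T -> R) (E : set T)
  (mE : measurable E) : T -> \bar R :=
  fun y => if `[< E y >] then ess_sup (mrestr mu (measurableC mE)) (fun z => (`|f z|)%:E)
           else (f y)%:E.

(* Main.v *)
Require Import Defs.
From HB Require Import structures.
From mathcomp Require Import all_boot all_order all_algebra.
From mathcomp Require Import all_classical all_reals all_analysis.
From mathcomp Require Import ess_sup_inf measurable_realfun.
From mathcomp Require Import lra.
Import Order.TTheory GRing.Theory Num.Theory.
Import numFieldNormedType.Exports.
Local Open Scope classical_set_scope.
Local Open Scope ring_scope.
Local Open Scope ereal_scope.
Section rearr.
Context d (T : measurableType d) (R : realType) (mu : {measure set T -> \bar R}).
Variable g : T -> \bar R.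
Hypothesis mg : forall s : R, measurable [set x | s%:E < `|g x|].

Lemma distf_anti (s1 s2 : R) : (s1 <= s2)%R -> distf mu g s2 <= distf mu g s1.
Proof.
move=> s12; apply: le_measure; rewrite ?inE //.
by move=> x /= h; apply: le_lt_trans h; rewrite lee_fin.
Qed.

Lemma distf_rc (s t : R) : t%:E < distf mu g s ->
  exists n : nat, t%:E < distf mu g (s + n.+1%:R^-1).
Proof.
move=> ht.
pose F n := [set x | (s + n.+1%:R^-1)%:E < `|g x|].
have mF n : measurable (F n) by exact: mg.
have UF : \bigcup_n F n = [set x | s%:E < `|g x|].
  apply/seteqP; split=> x /=.
    move=> [n _ /=]; apply: le_lt_trans; rewrite lee_fin lerDl invr_ge0 //.
  case E: `|g x| => [y| |] h.
  - have [k hk] := ltr_add_invr (h : (s < y)%R).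
    by exists k => //=; rewrite /F /= E lte_fin.
  - by exists 0%N => //=; rewrite /F /= E ltry.
  - by [].
have ndF : nondecreasing_seq F.
  move=> n m nm; apply/subsetPset => x /=; apply: le_lt_trans; rewrite lee_fin lerD2l.
  by rewrite lef_pV2 ?posrE // ler_nat ltnS.
have cv := @nondecreasing_cvg_mu _ _ R mu F mF (_ : measurable (\bigcup_n F n)) ndF.
rewrite UF in cv; have {cv} := cv (mg s).
have nd : nondecreasing_seq (mu \o F).
  move=> n m nm; apply: le_measure; rewrite ?inE //; exact/subsetPset/ndF.
move/(cvg_unique (@ereal_hausdorff R) (ereal_nondecreasing_cvgn nd)) => /= eq.
rewrite /distf -eq in ht.
have [y [n _ hy] h] := ereal_sup_gt ht.
by exists n; rewrite /distf -/(F n) hy.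
Qed.

Lemma rearr_ge0 t : 0 <= rearr mu g t.
Proof.
apply/ereal_infP => y [s [s0 _] <-]; by rewrite lee_fin.
Qed.

Lemma rearr_gt (r t : R) : (0 <= r)%R ->
  (r%:E < rearr mu g t) <-> (t%:E < distf mu g r).
Proof.
move=> r0; split.
  move=> h; rewrite ltNge; apply/negP => hd.
  have : rearr mu g t <= r%:E by apply: ereal_inf_lbound; exists r.
  by rewrite leNgt h.
move=> /distf_rc [n hn].
apply: (@lt_le_trans _ _ (r + n.+1%:R^-1)%:E); first by rewrite lte_fin ltrDl.
apply/ereal_infP => y [s [s0 hs] <-]; rewrite lee_fin.
rewrite leNgt; apply/negP => hlt.
have h1 := distf_anti _ _ (ltW hlt).
have := lt_le_trans hn (le_trans h1 hs); by rewrite ltxx.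
Qed.
End rearr.
Section uniq.
Context (R : realType).
Definition Gr : set (set \bar R) :=
  [set B | B = setT \/ exists r : R, B = `]r%:E, +oo[%classic].

Lemma ray_measurable (r : R) : measurable (`]r%:E, +oo[%classic : set \bar R).
Proof. exact: emeasurable_itv. Qed.

Lemma mGr : @measurable _ (\bar R) = <<s Gr >>.
Proof.
apply/seteqP; split.
  have h : @measurable _ (\bar R) = <<s (@ErealGenOInfty.G R) >> :=
    ErealGenOInfty.measurableE R.
  rewrite h.
  apply: smallest_sub; first exact: smallest_sigma_algebra.
  move=> B [r ->]; apply: sub_sigma_algebra; right; by exists r.
apply: smallest_sub; first exact: sigma_algebra_measurable.
move=> B [->|[r ->]]; [exact: measurableT | exact: ray_measurable].
Qed.

Lemma setI_Gr : setI_closed Gr.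
Proof.
move=> B C [->|[r1 ->]] [->|[r2 ->]].
- by left; rewrite setTI.
- by right; exists r2; rewrite setTI.
- by right; exists r1; rewrite setIT.
- right; exists (Num.max r1 r2); apply/seteqP; split=> x /=;
  rewrite !in_itv /= !andbT EFin_max gt_max //.
  by move=> [-> ->].
  by move=> /andP[-> ->].
Qed.

Lemma emeasure_eq (m1 m2 : {measure set \bar R -> \bar R}) :
  m1 setT < +oo -> m1 setT = m2 setT ->
  (forall r : R, m1 `]r%:E, +oo[%classic = m2 `]r%:E, +oo[%classic) ->
  forall B, measurable B -> m1 B = m2 B.
Proof.
move=> fin eT er B mB.
apply: (measure_unique Gr (fun _ => setT) mGr setI_Gr) => //.
- by move=> _; left.
- by rewrite bigcup_const.
- by move=> C [->|[r ->]].
Qed.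
End uniq.

Section spec.
Context d (T : measurableType d) (R : realType) (mu : {finite_measure set T -> \bar R}).
Variables (f : T -> R) (E : set T) (mE : measurable E).
Hypothesis mf : measurable_fun setT f.
Hypothesis hE0 : 0 < mu E.
Hypothesis hET : mu E < mu setT.

Let S := ess_sup (mrestr mu (measurableC mE)) (fun z => (`|f z|)%:E).
Let A (r : R) := ~` E `&` [set x | r%:E < `|(f x)%:E|].

Lemma mlt (r : R) : measurable [set x | r%:E < `|(f x)%:E|].
Proof.
rewrite -[X in measurable X]setTI.
apply: measurable_lte => //.
apply: measurableT_comp => //; exact: measurableT_comp => //.
Qed.

Lemma mA r : measurable (A r).
Proof. apply: measurableI; [exact: measurableC | exact: mlt]. Qed.

Lemma muC : mu setT = mu E + mu (~` E).
Proof. by rewrite -measureU ?setICr ?setUv //; exact: measurableC. Qed.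

Lemma muC_gt0 : 0 < mu (~` E).
Proof.
have fE := fin_num_measure mu E mE.
have fC := fin_num_measure mu (~` E) (measurableC mE).
move: hET; rewrite muC; rewrite -{1}(adde0 (mu E)) lteD2lE //.
Qed.

Lemma S_ge0 : 0 <= S.
Proof.
rewrite /S; have := (@ess_sup_ger _ _ _ (mrestr mu (measurableC mE)) (fun z => (`|f z|)%R) 0); apply.
  by change (0 < mu (setT `&` ~` E)); rewrite setTI muC_gt0.
by move=> t; rewrite lee_fin.
Qed.

Lemma muA0 r : S <= r%:E -> mu (A r) = 0.
Proof.
move=> Sr.
have [N [mN N0 sN]] := ess_sup_ge (mrestr mu (measurableC mE)) (fun z => (`|f z|)%:E).
apply/eqP; rewrite eq_le measure_ge0 andbT.
rewrite -N0 /mrestr; apply: le_measure; rewrite ?inE; [exact: mA|exact: measurableI (measurableC mE)|].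
move=> x [xE hx]; split => //; apply: sN => /= hle.
have := lt_le_trans hx (le_trans hle Sr); by rewrite ltxx.
Qed.

Lemma set_dec r : [set x | r%:E < `|ftilde mu f mE x|] =
  (E `&` [set _ | r%:E < `|S|]) `|` A r.
Proof.
apply/seteqP; split=> x; rewrite /ftilde /=; case: (asboolP (E x)) => xE.
- by move=> h; left.
- by move=> h; right.
- by case=> [[_ h]|[nE _]].
- by case=> [[xE' _]|[_ h]].
Qed.

Lemma distf_tilde r : distf mu (ftilde mu f mE) r =
  (if r%:E < `|S| then mu E else 0) + mu (A r).
Proof.
rewrite /distf set_dec; case: ifPn => h.
- have -> : E `&` [set _ | true] = E.
    by apply/seteqP; split=> x /=; [case | move=> ?; split].
  rewrite measureU //; first exact: mA.
  by rewrite setIA setICr set0I.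
- have -> : E `&` [set _ | false] = set0.
    by apply/seteqP; split=> x // [_ hx].
  by rewrite set0U add0e.
Qed.

Lemma distf_f_le r : distf mu (fun x => (f x)%:E) r <= mu E + mu (A r).
Proof.
rewrite /distf; apply: le_trans (measureU2 mu mE (mA r)).
apply: le_measure; rewrite ?inE //; [exact: mlt | exact: measurableU mE (mA r) | ].
by move=> x hx; case: (asboolP (E x)) => xE; [left | right].
Qed.

Lemma part1 t : mu E <= t%:E ->
  rearr mu (fun x => (f x)%:E) t <= rearr mu (ftilde mu f mE) t.
Proof.
move=> Et; apply: le_ereal_inf => y [s [s0 hs] <-]; exists s => //; split => //.
rewrite distf_tilde in hs; move: hs; case: ifPn => h hs.
- exact: le_trans (distf_f_le s) hs.
- have S_s : S <= s%:E by move: h; rewrite -leNgt gee0_abs //; exact: S_ge0.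
  by apply: le_trans (distf_f_le s) _; rewrite muA0 // adde0.
Qed.

Lemma mtilde s : measurable [set x | s%:E < `|ftilde mu f mE x|].
Proof.
rewrite set_dec; apply: measurableU; last exact: mA.
apply: measurableI mE _; case: (_ < _).
- by rewrite (_ : [set _ : T | true] = setT) //; apply/seteqP; split.
- by rewrite (_ : [set _ : T | false] = set0) //; apply/seteqP; split.
Qed.

Let a := fine (mu E).
Let b := fine (mu setT).
Let I := `[a, b]%classic.

Lemma fE : mu E = a%:E.
Proof. by rewrite /a fineK // fin_num_measure. Qed.
Lemma fT : mu setT = b%:E.
Proof. by rewrite /b fineK // fin_num_measure. Qed.
Lemma fC : mu (~` E) = (b - a)%:E.
Proof.
have := muC; rewrite fT fE -(fineK (fin_num_measure mu _ (measurableC mE))).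
rewrite -EFinD => -[->]; congr EFin; lra.
Qed.
Lemma a_gt0 : (0 < a)%R.
Proof. by have := hE0; rewrite fE lte_fin. Qed.
Lemma a_lt_b : (a < b)%R.
Proof. by have := hET; rewrite fE fT lte_fin. Qed.

Lemma rayset r : (0 <= r)%R ->
  [set t | r%:E < rearr mu (ftilde mu f mE) t] =
  [set t : R | t%:E < distf mu (ftilde mu f mE) r].
Proof.
move=> r0; apply/seteqP; split=> t /=; by move/(@rearr_gt _ _ _ mu _ mtilde r t r0).
Qed.

Lemma core r : lebesgue_measure (I `&` [set t | r%:E < rearr mu (ftilde mu f mE) t])
  = mu (A r).
Proof.
case: (ltP r 0%R) => r0.
- rewrite (_ : I `&` _ = I); last first.
    apply/seteqP; split=> t; first by case.
    move=> It; split; first exact: It.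
    rewrite /=; apply: (lt_le_trans _ (@rearr_ge0 _ _ _ mu _ t)); by rewrite lte_fin.
  rewrite (_ : A r = ~` E); last first.
    apply/seteqP; split=> x; first by case.
    move=> nE; split; first exact: nE.
    by rewrite /= lte_fin; exact: lt_le_trans r0 (normr_ge0 _).
  rewrite fC lebesgue_measure_itv /= lte_fin a_lt_b; done.
- rewrite rayset // distf_tilde; case: ifPn => hS.
  + have fA : mu (A r) = (fine (mu (A r)))%:E by rewrite fineK // fin_num_measure //; exact: mA.
    set n := fine (mu (A r)) in fA *.
    have n0 : (0 <= n)%R by rewrite -lee_fin -fA measure_ge0.
    have nb : (a + n <= b)%R.
      have : mu (A r) <= mu (~` E).
        by apply: le_measure; rewrite ?inE; [exact: mA | exact: measurableC | move=> x []].
      rewrite fA fC lee_fin; lra.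
    rewrite fA fE -EFinD (_ : I `&` _ = `[a, (a + n)%R[%classic); last first.
      apply/seteqP; split=> t; rewrite /I /= !in_itv /= lte_fin.
        by move=> [/andP[-> _] ->].
      move=> /andP[ha tn]; split => //; apply/andP; split => //; lra.
    rewrite lebesgue_measure_itv /= lte_fin; case: ifPn => h; congr EFin; lra.
  + have SS : S <= r%:E by move: hS; rewrite -leNgt gee0_abs //; exact: S_ge0.
    rewrite muA0 // add0e (_ : I `&` _ = set0) ?measure0 //.
    apply/seteqP; split=> t //; rewrite /I /= in_itv /= lte_fin => -[/andP[ha _] t0].
    have := a_gt0; lra.
Qed.

Lemma part2 (beta : R) :
  \int[mu]_(x in ~` E) (`|ftilde mu f mE x| `^ beta) =
  \int[lebesgue_measure]_(t in `[fine (mu E), fine (mu setT)])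
     ((rearr mu (ftilde mu f mE) t) `^ beta).
Proof.
pose D : set (\bar R) := ~` [set -oo].
have mD : measurable D by apply: measurableC.
pose h := fun y : \bar R => y `^ beta.
have mh : measurable_fun D h.
  by apply: (measurable_funS measurableT) => //; exact: measurable_poweR.
have h0 : {in D, forall y, 0 <= h y} by move=> y _; exact: poweR_ge0.
pose phi1 := fun x => if `[< E x >] then -oo else `|(f x)%:E|.
have phi1_ray r : phi1 @^-1` `]r%:E, +oo[%classic = A r.
  apply/seteqP; split=> x; rewrite /phi1 /= in_itv /= andbT; case: asboolP => xE //;
    first [by move=> h1; split | by move=> [nE _]; case: (nE xE) | by move=> [_ ?]].
have mphi1 : measurable_fun setT phi1.
  apply: (measurability (@Gr R) (mGr R)) => _ [B [->|[r ->]] <-].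
  - by rewrite preimage_setT setIT.
  - by rewrite setTI phi1_ray; exact: mA.
pose phi2 := fun t => if `[< I t >] then rearr mu (ftilde mu f mE) t else -oo.
have phi2_ray r : phi2 @^-1` `]r%:E, +oo[%classic =
    I `&` [set t | r%:E < rearr mu (ftilde mu f mE) t].
  apply/seteqP; split=> t; rewrite /phi2 /= in_itv /= andbT; case: asboolP => It //.
  - by case.
  - by move=> [/It].

have mphi2 : measurable_fun setT phi2.
  apply: (measurability (@Gr R) (mGr R)) => _ [B [->|[r ->]] <-].
  - by rewrite preimage_setT setIT.
  - rewrite setTI phi2_ray; apply: measurableI; first exact: measurable_itv.
    case: (ltP r 0%R) => r0.
    + rewrite (_ : [set t | _] = setT) //; apply/seteqP; split=> t // _ /=.
      apply: (lt_le_trans _ (@rearr_ge0 _ _ _ mu _ t)); by rewrite lte_fin.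
    + rewrite rayset //; rewrite -[X in measurable X]setTI.
      apply: measurable_lte => //; try exact: EFin_measurable.
have pre1 : phi1 @^-1` D = ~` E.
  apply/seteqP; split=> x; rewrite /phi1 /D /=; case: asboolP => //.
have pre2 : phi2 @^-1` D = I.
  apply/seteqP; split=> t; rewrite /phi2 /D /=; case: asboolP => // It _ h1.
  have := @rearr_ge0 _ _ _ mu (ftilde mu f mE) t; rewrite h1.
  done.
apply: (@eq_trans _ _ (\int[pushforward mu phi1]_(y in D) h y)).
  rewrite ge0_integral_pushforward // pre1; apply: eq_integral => x; rewrite inE => xE.
  by rewrite /h /phi1 /ftilde /=; case: asboolP.
apply: (@eq_trans _ _ (\int[pushforward lebesgue_measure phi2]_(y in D) h y)); last first.
  rewrite ge0_integral_pushforward // pre2; apply: eq_integral => t; rewrite inE => It.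
  by rewrite /h /phi2 /=; case: asboolP.
apply: eq_measure_integral => B mB BD.
unshelve epose (P1 := (pushforward mu phi1 : {measure set _ -> \bar R})); first exact: mphi1.
unshelve epose (P2 := (pushforward lebesgue_measure phi2 : {measure set _ -> \bar R})); first exact: mphi2.
pose Q1 := mrestr P1 mD.
pose Q2 := mrestr P2 mD.
have rayD r : `]r%:E, +oo[%classic `&` D = `]r%:E, +oo[%classic.
  apply/setIidl => x; rewrite /D /= in_itv /= andbT => hx hx'.
  by move: hx; rewrite hx'.
have QP1 C : Q1 C = mu (phi1 @^-1` (C `&` D)) by [].
have QP2 C : Q2 C = lebesgue_measure (phi2 @^-1` (C `&` D)) by [].
have key : Q1 B = Q2 B.
  apply: emeasure_eq => //.
  - change (mu (phi1 @^-1` (setT `&` D)) < +oo).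
    by rewrite setTI pre1 fC ltry.
  - change (mu (phi1 @^-1` (setT `&` D)) = lebesgue_measure (phi2 @^-1` (setT `&` D))).
    rewrite setTI pre1 pre2 fC.
    by rewrite lebesgue_measure_itv /= lte_fin a_lt_b.
  - move=> r.
    change (mu (phi1 @^-1` (`]r%:E, +oo[%classic `&` D)) =
      lebesgue_measure (phi2 @^-1` (`]r%:E, +oo[%classic `&` D))).
    by rewrite rayD phi1_ray phi2_ray core.
have BDe : B `&` D = B by apply/setIidl.
by move: key; rewrite QP1 QP2 BDe.
Qed.
End spec.

Theorem lemma5 (d : measure_display) (T : measurableType d) (R : realType)
  (mu : {finite_measure set T -> \bar R}) (beta : R) (f : T -> R) (E : set T)
  (mE : measurable E) :
  (1 < beta)%R -> measurable_fun setT f -> 0 < mu E -> mu E < mu setT ->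
  (forall t : R, mu E <= t%:E -> t%:E <= mu setT ->
     rearr mu (fun x => (f x)%:E) t <= rearr mu (ftilde mu f mE) t) /\
  \int[mu]_(x in ~` E) (`|ftilde mu f mE x| `^ beta) =
  \int[lebesgue_measure]_(t in `[fine (mu E), fine (mu setT)])
     ((rearr mu (ftilde mu f mE) t) `^ beta).
Proof.
move=> b1 mf hE0 hET; split.
- by move=> t Et _; apply: part1.
- by apply: part2.
Qed.
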